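(* Let $A \in \mathbb{R}^{m \times r}$, $B=(b_{ji}) \in \mathbb{R}^{r \times n}$ with rows $b_1,\dots,b_r$, $S\subseteq\mathbb{R}^n$, and for $\kappa\in\mathbb{R}^r_+$ let $f_\kappa(x) = A_\kappa x^B$ on $\mathbb{R}^n_+$. Assume $f_\kappa$ is injective with respect to $S$ for all $\kappa \in \mathbb{R}^r_+$. Let $\Omega_B = \{ x \in \overline{\mathbb{R}}^n_+ \mid x_i \neq 0 \text{ whenever } b_{ji} < 0 \text{ for some } j \in [r] \}$ and let $\bar f_\kappa\colon\Omega_B\to\mathbb{R}^m$, $\bar f_\kappa(x)=A_\kappa x^B$, be the extension of $f_\kappa$. Let $x,y \in \Omega_B$ with $x \neq y$ and $x-y\in S$, such that for every $j \in [r]$, $x^{b_j}=y^{b_j}=0$ implies $x_i = y_i = 0$ for all $i \in [n]$ with $b_{ji} \neq 0$. Then $\bar f_\kappa(x) \neq \bar f_\kappa(y)$ for all $\kappa \in \mathbb{R}^r_+$.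
   Context: $\mathbb{R}_+$ denotes the strictly positive reals and $\overline{\mathbb{R}}_+$ the nonnegative reals. $x^{b_j}=\prod_i x_i^{b_{ji}}$ with the convention $0^0=1$ (well defined on $\Omega_B$), $x^B=(x^{b_1},\dots,x^{b_r})$, $A_\kappa=A\,\mathrm{diag}(\kappa)$, $[r]=\{1,\dots,r\}$. A function $g$ on $\mathbb{R}^n_+$ is injective with respect to $S$ if $x,y\in\mathbb{R}^n_+$, $x\ne y$, $x-y\in S$ imply $g(x)\neq g(y)$. *)

(* Defs.v *)
From Stdlib Require Import Reals.
From mathcomp Require Import all_boot.
Open Scope R_scope.
Set Implicit Arguments.

(* Real power with the convention 0^0 = 1 and 0^e = 0 for e <> 0
   (on Omega_B, 0 is only raised to exponents e >= 0). *)
Definition rpow (a e : R) : R :=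
  if Req_EM_T e 0 then 1 else if Req_EM_T a 0 then 0 else Rpower a e.

Definition sumI (n : nat) (f : 'I_n -> R) : R := foldr Rplus 0 (map f (enum 'I_n)).
Definition prodI (n : nat) (f : 'I_n -> R) : R := foldr Rmult 1 (map f (enum 'I_n)).

Definition monom (r n : nat) (B : 'I_r -> 'I_n -> R) (x : 'I_n -> R) (j : 'I_r) : R :=
  @prodI n (fun i => rpow (x i) (B j i)).

(* A_kappa x^B = A diag(kappa) x^B *)
Definition fk (m r n : nat) (A : 'I_m -> 'I_r -> R) (B : 'I_r -> 'I_n -> R)
  (kappa : 'I_r -> R) (x : 'I_n -> R) : 'I_m -> R :=
  fun k => @sumI r (fun j => A k j * kappa j * monom B x j).

Definition positive_vec (n : nat) (x : 'I_n -> R) : Prop := forall i, 0 < x i.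

Definition injective_wrt (m n : nat) (g : ('I_n -> R) -> ('I_m -> R))
  (S : ('I_n -> R) -> Prop) : Prop :=
  forall x y, positive_vec x -> positive_vec y -> x <> y ->
    S (fun i => x i - y i) -> g x <> g y.

Definition OmegaB (r n : nat) (B : 'I_r -> 'I_n -> R) (x : 'I_n -> R) : Prop :=
  (forall i, 0 <= x i) /\ (forall i, (exists j, B j i < 0) -> x i <> 0).

(* Main.v *)
Require Import Defs.
From Stdlib Require Import Reals Lra FunctionalExtensionality.
From mathcomp Require Import all_boot.
Open Scope R_scope.

Lemma rpow_b0 a : rpow a 0 = 1.
Proof. unfold rpow; destruct (Req_EM_T 0 0); [reflexivity|contradiction]. Qed.

Lemma rpow_pos a b : 0 < a -> b <> 0 -> rpow a b = Rpower a b.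
Proof. intros ha hb; unfold rpow; destruct (Req_EM_T b 0); [contradiction|].
destruct (Req_EM_T a 0); [lra|reflexivity]. Qed.

Lemma rpow_zero b : b <> 0 -> rpow 0 b = 0.
Proof. intros hb; unfold rpow; destruct (Req_EM_T b 0); [contradiction|].
destruct (Req_EM_T 0 0); [reflexivity|contradiction]. Qed.

Lemma factor_lim z b c : 0 <= z -> (b < 0 -> z <> 0) -> (c = 0 \/ c = 1) ->
 limit1_in (fun e => rpow (z + e*c) b) (fun e => 0 < e) (rpow z b) 0.
Proof.
intros hz hbz hc.
destruct (Req_EM_T b 0) as [->|hb].
- intros eps he; exists 1; split; [lra|]; intros e _; simpl; unfold R_dist.
  rewrite !rpow_b0 Rminus_diag Rabs_R0; lra.
- destruct hc as [->| ->].
  + intros eps he; exists 1; split; [lra|]; intros e _; simpl; unfold R_dist.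
    rewrite Rmult_0_r Rplus_0_r Rminus_diag Rabs_R0; lra.
  + destruct (Req_EM_T z 0) as [->|hz0].
    * assert (hbp : 0 < b) by (destruct (Rlt_or_le b 0) as [h|h]; [exfalso; apply (hbz h); reflexivity|lra]).
      intros eps he; exists (Rpower eps (/ b)); split.
      { unfold Rpower; apply exp_pos. }
      intros e [he0 hd]; simpl in *; unfold R_dist in *.
      rewrite Rminus_0_r (Rabs_right e) in hd; [|lra].
      rewrite (rpow_zero _ hb) Rplus_0_l Rmult_1_r Rminus_0_r (rpow_pos _ _ he0 hb).
      assert (hp : 0 < Rpower e b) by (unfold Rpower; apply exp_pos).
      rewrite Rabs_right; [|lra].
      replace eps with (Rpower (Rpower eps (/ b)) b).
      { apply Rlt_Rpower_l; lra. }
      rewrite Rpower_mult Rinv_l; [|exact hb]. apply Rpower_1; lra.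
    * assert (hzp : 0 < z) by lra.
      assert (Hc := derivable_continuous_pt (fun a => Rpower a b) z
                (exist _ _ (derivable_pt_lim_power z b hzp))).
      intros eps he; destruct (Hc eps he) as [a [ha H]].
      exists (Rmin a z); split; [apply Rmin_pos; lra|].
      intros e [he0 hd]; simpl in *; unfold R_dist in *.
      rewrite Rminus_0_r (Rabs_right e) in hd; [|lra].
      assert (hze : 0 < z + e) by lra.
      rewrite Rmult_1_r (rpow_pos _ _ hze hb) (rpow_pos _ _ hzp hb).
      apply (H (z + e)). split.
      { split; [exact I|lra]. }
      simpl; unfold R_dist. replace (z + e - z) with e by ring.
      rewrite Rabs_right; [|lra]. pose proof (Rmin_l a z); lra.
Qed.

Definition Dp : R -> Prop := fun e => 0 < e.

Lemma prod_lim (T : Type) (s : seq T) (F : R -> T -> R) (L : T -> R) :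
  (forall t, limit1_in (fun e => F e t) Dp (L t) 0) ->
  limit1_in (fun e => foldr Rmult 1 (map (F e) s)) Dp (foldr Rmult 1 (map L s)) 0.
Proof.
intros HF; induction s as [|a s IH].
- exact (limit_free (fun _ => 1) Dp 0 0).
- simpl. apply limit_mul; [apply HF|exact IH].
Qed.

Lemma prod_zero (T : eqType) (s : seq T) (f : T -> R) i :
  i \in s -> f i = 0 -> foldr Rmult 1 (map f s) = 0.
Proof.
intros hi hf; induction s as [|a s IH]; [discriminate|].
simpl. rewrite in_cons in hi. destruct (i == a) eqn:E.
- move/eqP: E => E; subst a. rewrite hf. ring.
- simpl in hi. rewrite (IH hi). ring.
Qed.

Lemma prod_ext (T : Type) (s : seq T) (f g : T -> R) :
  (forall i, f i = g i) -> foldr Rmult 1 (map f s) = foldr Rmult 1 (map g s).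
Proof. intros h; induction s as [|a s IH]; simpl; [reflexivity|]. rewrite h IH; reflexivity. Qed.

Lemma sum_ext (T : Type) (s : seq T) (f g : T -> R) :
  (forall i, f i = g i) -> foldr Rplus 0 (map f s) = foldr Rplus 0 (map g s).
Proof. intros h; induction s as [|a s IH]; simpl; [reflexivity|]. rewrite h IH; reflexivity. Qed.

Lemma sum_minus (T : Type) (s : seq T) (f g : T -> R) :
  foldr Rplus 0 (map f s) - foldr Rplus 0 (map g s) =
  foldr Rplus 0 (map (fun j => f j - g j) s).
Proof. induction s as [|a s IH]; simpl; [ring|]. rewrite -IH; ring. Qed.

Lemma unif (T : eqType) (P : T -> R -> Prop) (s : seq T) :
  (forall j, exists d, 0 < d /\ forall e, 0 < e < d -> P j e) ->
  exists d, 0 < d /\ forall j, j \in s -> forall e, 0 < e < d -> P j e.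
Proof.
intros H; induction s as [|a s IH].
- exists 1; split; [lra|]. intros j hj; discriminate.
- destruct IH as [d1 [hd1 H1]]. destruct (H a) as [d2 [hd2 H2]].
  exists (Rmin d1 d2); split; [apply Rmin_pos; lra|].
  intros j hj e he. pose proof (Rmin_l d1 d2); pose proof (Rmin_r d1 d2).
  rewrite in_cons in hj. destruct (j == a) eqn:E.
  + move/eqP: E => E; subst j. apply H2; lra.
  + simpl in hj. apply H1; [exact hj|lra].
Qed.

Definition cvec (n : nat) (x y : 'I_n -> R) (i : 'I_n) : R :=
  if Req_EM_T (x i) 0 then 1 else if Req_EM_T (y i) 0 then 1 else 0.
Arguments cvec {n}.

Lemma cvec01 n (x y : 'I_n -> R) i : cvec x y i = 0 \/ cvec x y i = 1.
Proof. unfold cvec; destruct (Req_EM_T (x i) 0); destruct (Req_EM_T (y i) 0); simpl in *; auto. Qed.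

Lemma cvec0 n (x y : 'I_n -> R) i : cvec x y i = 0 -> x i <> 0 /\ y i <> 0.
Proof. unfold cvec; destruct (Req_EM_T (x i) 0); destruct (Req_EM_T (y i) 0); simpl in *; intros h; try lra; split; assumption. Qed.

Lemma cvec_nz n (x y : 'I_n -> R) i : x i <> 0 -> y i <> 0 -> cvec x y i = 0.
Proof. unfold cvec; destruct (Req_EM_T (x i) 0); destruct (Req_EM_T (y i) 0); simpl in *; intros h1 h2; tauto. Qed.

Lemma cvec_sym n (x y : 'I_n -> R) i : cvec x y i = cvec y x i.
Proof. unfold cvec; destruct (Req_EM_T (x i) 0); destruct (Req_EM_T (y i) 0); simpl in *; reflexivity. Qed.

Lemma monom_nz r n (B : 'I_r -> 'I_n -> R) x j i :
  monom B x j <> 0 -> B j i <> 0 -> x i <> 0.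
Proof.
intros hm hb hx; apply hm. unfold monom, prodI.
apply (@prod_zero _ (enum (ordinal n)) (fun i0 => rpow (x i0) (B j i0)) i); [by rewrite mem_enum|]. rewrite hx. exact (rpow_zero _ hb).
Qed.

Lemma monom_lim r n (B : 'I_r -> 'I_n -> R) (x c : 'I_n -> R) j :
  OmegaB B x -> (forall i, c i = 0 \/ c i = 1) ->
  limit1_in (fun e => monom B (fun i => x i + e * c i) j) Dp (monom B x j) 0.
Proof.
intros [h1 h2] hc. unfold monom, prodI.
apply (@prod_lim _ (enum (ordinal n)) (fun e i => rpow (x i + e * c i) (B j i))).
intros i. apply factor_lim; [apply h1| |apply hc].
intros hb; apply h2; exists j; exact hb.
Qed.

Theorem mainTheorem10 (m r n : nat) (A : 'I_m -> 'I_r -> R) (B : 'I_r -> 'I_n -> R)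
  (S : ('I_n -> R) -> Prop)
  (Hinj : forall kappa : 'I_r -> R, positive_vec kappa -> injective_wrt (fk A B kappa) S)
  (x y : 'I_n -> R) (Hx : OmegaB B x) (Hy : OmegaB B y) (Hxy : x <> y)
  (HS : S (fun i => x i - y i))
  (Hzero : forall j : 'I_r, monom B x j = 0 -> monom B y j = 0 ->
     forall i : 'I_n, B j i <> 0 -> x i = 0 /\ y i = 0) :
  forall kappa : 'I_r -> R, positive_vec kappa -> fk A B kappa x <> fk A B kappa y.
Proof.
intros kappa hk H.
set c := cvec x y.
set X := fun e i => x i + e * c i.
set Y := fun e i => y i + e * c i.
assert (Hj : forall j, exists d, 0 < d /\ forall e, 0 < e < d ->
   (monom B x j = monom B y j -> monom B (X e) j = monom B (Y e) j) /\
   (monom B x j <> monom B y j ->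
      0 < (monom B (X e) j - monom B (Y e) j) * (monom B x j - monom B y j))).
{ intros j. destruct (Req_EM_T (monom B x j) (monom B y j)) as [heq|hne].
  - exists 1; split; [lra|]. intros e he; split; [intros _|intros h; contradiction].
    destruct (Req_EM_T (monom B x j) 0) as [h0|h0].
    + unfold monom, prodI. apply prod_ext. intros i.
      destruct (Req_EM_T (B j i) 0) as [hb|hb]; [rewrite hb !rpow_b0; reflexivity|].
      assert (h0y : monom B y j = 0) by (rewrite -heq; exact h0). destruct (Hzero j h0 h0y i hb) as [e1 e2].
      unfold X, Y. rewrite e1 e2; reflexivity.
    + assert (h0' : monom B y j <> 0) by (rewrite -heq; exact h0).
      assert (EX : monom B (X e) j = monom B x j).
      { unfold monom, prodI. apply prod_ext. intros i.
        destruct (Req_EM_T (B j i) 0) as [hb|hb]; [rewrite hb !rpow_b0; reflexivity|].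
        unfold X, c. rewrite (@cvec_nz _ x y i (@monom_nz _ _ B x j i h0 hb) (@monom_nz _ _ B y j i h0' hb)).
        rewrite Rmult_0_r Rplus_0_r; reflexivity. }
      assert (EY : monom B (Y e) j = monom B y j).
      { unfold monom, prodI. apply prod_ext. intros i.
        destruct (Req_EM_T (B j i) 0) as [hb|hb]; [rewrite hb !rpow_b0; reflexivity|].
        unfold Y, c. rewrite (@cvec_nz _ x y i (@monom_nz _ _ B x j i h0 hb) (@monom_nz _ _ B y j i h0' hb)).
        rewrite Rmult_0_r Rplus_0_r; reflexivity. }
      rewrite EX EY; exact heq.
  - assert (L := limit_minus _ _ _ _ _ _ (@monom_lim _ _ B x c j Hx (cvec01 _ x y)) (@monom_lim _ _ B y c j Hy (cvec01 _ x y))).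
    set p := monom B x j - monom B y j.
    assert (hp : p <> 0) by (unfold p; lra).
    assert (hap : 0 < Rabs p / 2) by (pose proof (Rabs_pos_lt p hp); lra).
    destruct (L _ hap) as [d [hd Hd]].
    exists d; split; [lra|]. intros e he; split; [intros h; contradiction|intros _].
    assert (Hde := Hd e). simpl in Hde; unfold R_dist, Dp in Hde.
    rewrite Rminus_0_r (Rabs_right e) in Hde; [|lra].
    specialize (Hde (conj (proj1 he) (proj2 he))).
    change (0 < (monom B (X e) j - monom B (Y e) j) * p).
    change (Rabs ((monom B (X e) j - monom B (Y e) j) - p) < Rabs p / 2) in Hde.
    revert Hde; generalize (monom B (X e) j - monom B (Y e) j); intros q Hq.
    destruct (Rle_or_lt 0 p) as [hp0|hp0].
    + rewrite (Rabs_right p) in Hq; [|lra]. apply Rabs_def2 in Hq. nra.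
    + rewrite (Rabs_left p) in Hq; [|lra]. apply Rabs_def2 in Hq. nra. }
destruct (@unif _ _ (enum 'I_r) Hj) as [d [hd Hd]].
set e := d / 2.
assert (he : 0 < e < d) by (unfold e; lra).
assert (HP : forall j,
   (monom B x j = monom B y j -> monom B (X e) j = monom B (Y e) j) /\
   (monom B x j <> monom B y j ->
      0 < (monom B (X e) j - monom B (Y e) j) * (monom B x j - monom B y j))).
{ intros j; apply Hd; [by rewrite mem_enum|exact he]. }
set kappa' := fun j => if Req_EM_T (monom B x j) (monom B y j) then kappa j
   else kappa j * (monom B x j - monom B y j) / (monom B (X e) j - monom B (Y e) j).
assert (hk' : positive_vec kappa').
{ intros j. unfold kappa'. destruct (Req_EM_T (monom B x j) (monom B y j)) as [h|h]; [apply hk|].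
  assert (hpq := proj2 (HP j) h).
  revert hpq; generalize (monom B x j - monom B y j) (monom B (X e) j - monom B (Y e) j).
  intros p q hpq. assert (hq : q <> 0) by (intro hq; rewrite hq in hpq; lra).
  replace (kappa j * p / q) with (kappa j * (q * p) * (/ q * / q)) by (field; exact hq).
  apply Rmult_lt_0_compat; [apply Rmult_lt_0_compat; [apply hk|exact hpq]|].
  exact (Rsqr_pos_lt _ (Rinv_neq_0_compat _ hq)). }
assert (hpos : forall z, OmegaB B z -> (forall i, cvec x y i = 0 -> z i <> 0) ->
   positive_vec (fun i => z i + e * c i)).
{ intros z [hz _] hz0 i. destruct (cvec01 _ x y i) as [h|h]; unfold c; rewrite h.
  - pose proof (hz i); pose proof (hz0 i h); rewrite Rmult_0_r Rplus_0_r; lra.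
  - pose proof (hz i); lra. }
apply (Hinj kappa' hk' (X e) (Y e)).
- apply hpos; [exact Hx|intros i h; exact (proj1 (@cvec0 _ x y i h))].
- apply hpos; [exact Hy|intros i h; exact (proj2 (@cvec0 _ x y i h))].
- intros heq; apply Hxy; apply functional_extensionality; intros i.
  assert (h := f_equal (fun g => g i) heq). unfold X, Y in h; simpl in h; lra.
- replace (fun i => X e i - Y e i) with (fun i => x i - y i); [exact HS|].
  apply functional_extensionality; intros i; unfold X, Y; ring.
- apply functional_extensionality; intros k.
  assert (hk0 := f_equal (fun g => g k) H); simpl in hk0.
  apply Rminus_diag_uniq. apply Rminus_diag_eq in hk0.
  rewrite -hk0. unfold fk, sumI. rewrite !sum_minus. apply sum_ext; intros j.
  unfold kappa'. destruct (Req_EM_T (monom B x j) (monom B y j)) as [h|h].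
  + simpl. rewrite (proj1 (HP j) h) h; ring.
  + simpl. assert (hpq := proj2 (HP j) h).
    assert (hq : monom B (X e) j - monom B (Y e) j <> 0)
      by (intro hq; rewrite hq in hpq; lra).
    field. exact hq.
Qed.
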